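(* Let $R$ be a ring and let $A$ be an $(R,R)$-bimodule which is also a (not necessarily unital) associative ring such that $(aw)r=a(wr)$, $(ar)w=a(rw)$ and $(ra)w=r(aw)$ for all $a,w\in A$, $r\in R$. Suppose that for every $a\in A$ there exists $w\in A$ with $a+w+aw=0$. Let $S=I(R;A)$ be the Dorroh (ideal) extension, i.e. the additive group $R\oplus A$ with multiplication $(r,a)(s,w)=(rs,\,rw+as+aw)$. Then $R$ is NJ-symmetric if and only if $S$ is NJ-symmetric.
   Context: Rings are associative; $R$ has identity. $N(T)$ is the set of nilpotent elements, $J(T)$ the Jacobson radical of a ring $T$. $T$ is NJ-symmetric if for all $a,b,c\in T$, $abc\in N(T)$ implies $bac\in J(T)$. *)

(* Defs.v *)
From HB Require Import structures.
From mathcomp Require Import all_boot all_order all_algebra ssrAC.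
Set Implicit Arguments. Unset Strict Implicit. Unset Printing Implicit Defensive.
Import GRing.Theory.
Local Open Scope ring_scope.

Definition nilp (T : pzRingType) (x : T) : Prop := exists n : nat, x ^+ n = 0.

Definition left_ideal (T : pzRingType) (I : T -> Prop) : Prop :=
  [/\ I 0, (forall x y, I x -> I y -> I (x - y)) & (forall r x, I x -> I (r * x))].

Definition maximal_left_ideal (T : pzRingType) (M : T -> Prop) : Prop :=
  [/\ left_ideal M, ~ M 1 &
      forall I : T -> Prop, left_ideal I -> (forall x, M x -> I x) -> ~ I 1 ->
        forall x, I x -> M x].

Definition jacobson (T : pzRingType) (x : T) : Prop :=
  forall M : T -> Prop, maximal_left_ideal M -> M x.

Definition NJ_symmetric (T : pzRingType) : Prop :=
  forall a b c : T, nilp (a * b * c) -> jacobson (b * a * c).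

Record bimodRing (R : pzRingType) := BimodRing {
  bm_sort :> zmodType;
  bm_mul : bm_sort -> bm_sort -> bm_sort;
  bm_lact : R -> bm_sort -> bm_sort;
  bm_ract : bm_sort -> R -> bm_sort;
  bm_mulA : forall a b c, bm_mul a (bm_mul b c) = bm_mul (bm_mul a b) c;
  bm_mulDl : forall a b c, bm_mul (a + b) c = bm_mul a c + bm_mul b c;
  bm_mulDr : forall a b c, bm_mul a (b + c) = bm_mul a b + bm_mul a c;
  bm_lactDr : forall r a b, bm_lact r (a + b) = bm_lact r a + bm_lact r b;
  bm_lactDl : forall r s a, bm_lact (r + s) a = bm_lact r a + bm_lact s a;
  bm_lactA : forall r s a, bm_lact (r * s) a = bm_lact r (bm_lact s a);
  bm_lact1 : forall a, bm_lact 1 a = a;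
  bm_ractDl : forall a b r, bm_ract (a + b) r = bm_ract a r + bm_ract b r;
  bm_ractDr : forall a r s, bm_ract a (r + s) = bm_ract a r + bm_ract a s;
  bm_ractA : forall a r s, bm_ract a (r * s) = bm_ract (bm_ract a r) s;
  bm_ract1 : forall a, bm_ract a 1 = a;
  bm_lract : forall r a s, bm_ract (bm_lact r a) s = bm_lact r (bm_ract a s);
  bm_mul_ract : forall a w r, bm_ract (bm_mul a w) r = bm_mul a (bm_ract w r);
  bm_ract_mul : forall a r w, bm_mul (bm_ract a r) w = bm_mul a (bm_lact r w);
  bm_lact_mul : forall r a w, bm_mul (bm_lact r a) w = bm_lact r (bm_mul a w)
}.

Section Dorroh.
Variables (R : pzRingType) (A : bimodRing R).

Definition dorroh : Type := (R * A)%type.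
HB.instance Definition _ := GRing.Zmodule.on dorroh.

Definition dorroh_one : dorroh := (1, 0).
Definition dorroh_mul (x y : dorroh) : dorroh :=
  (x.1 * y.1, bm_lact x.1 y.2 + bm_ract x.2 y.1 + bm_mul x.2 y.2).

Lemma bm_lact0 (r : R) : bm_lact r (0 : A) = 0.
Proof. by apply: (addrI (bm_lact r 0)); rewrite -bm_lactDr !addr0. Qed.
Lemma bm_act0l (a : A) : bm_lact 0 a = 0.
Proof. by apply: (addrI (bm_lact 0 a)); rewrite -bm_lactDl !addr0. Qed.
Lemma bm_ract0 (a : A) : bm_ract a 0 = 0.
Proof. by apply: (addrI (bm_ract a 0)); rewrite -bm_ractDr !addr0. Qed.
Lemma bm_ract0l r : bm_ract (0 : A) r = 0.
Proof. by apply: (addrI (bm_ract 0 r)); rewrite -bm_ractDl !addr0. Qed.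
Lemma bm_mul0r (a : A) : bm_mul (0 : A) a = 0.
Proof. by apply: (addrI (bm_mul 0 a)); rewrite -bm_mulDl !addr0. Qed.
Lemma bm_mulr0 (a : A) : bm_mul a (0 : A) = 0.
Proof. by apply: (addrI (bm_mul a 0)); rewrite -bm_mulDr !addr0. Qed.

Lemma dorroh_mulA : associative dorroh_mul.
Proof.
move=> [r a] [s w] [t v]; rewrite /dorroh_mul /=; congr pair; first exact: mulrA.
rewrite !bm_lactDr !bm_ractDl !bm_mulDl !bm_mulDr !bm_lactA !bm_ractA.
rewrite !bm_lract !bm_mul_ract !bm_ract_mul !bm_lact_mul !bm_mulA.
by rewrite (AC (4*3) ((1*(2*4*6))*(3*5*7))).
Qed.

Lemma dorroh_mul1r : left_id dorroh_one dorroh_mul.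
Proof.
by move=> [s w]; rewrite /dorroh_mul /=; rewrite mul1r bm_lact1 bm_ract0l bm_mul0r !addr0.
Qed.

Lemma dorroh_mulr1 : right_id dorroh_one dorroh_mul.
Proof.
by move=> [s w]; rewrite /dorroh_mul /=; rewrite mulr1 bm_ract1 bm_lact0 bm_mulr0 add0r addr0.
Qed.

Lemma dorroh_mulDl : left_distributive dorroh_mul +%R.
Proof.
move=> [r a] [s w] [t v]; rewrite /dorroh_mul /=; congr pair; first exact: mulrDl.
rewrite bm_lactDl bm_ractDl bm_mulDl.
by rewrite (AC (3*3) ((1*4)*(2*5)*(3*6))).
Qed.

Lemma dorroh_mulDr : right_distributive dorroh_mul +%R.
Proof.
move=> [r a] [s w] [t v]; rewrite /dorroh_mul /=; congr pair; first exact: mulrDr.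
rewrite bm_lactDr bm_ractDr bm_mulDr.
by rewrite (AC (3*3) ((1*4)*(2*5)*(3*6))).
Qed.

HB.instance Definition _ := GRing.Zmodule_isPzRing.Build dorroh
  dorroh_mulA dorroh_mul1r dorroh_mulr1 dorroh_mulDl dorroh_mulDr.

End Dorroh.

(* Main.v *)
Require Import Defs.
From HB Require Import structures.
From mathcomp Require Import all_boot all_order all_algebra ssrAC.
From Stdlib Require Import Classical.
Import GRing.Theory.
Set Implicit Arguments. Unset Strict Implicit.
Local Open Scope ring_scope.

Lemma d_mulE (R : pzRingType) (A : bimodRing R) (x y : dorroh A) :
  x * y = dorroh_mul x y.
Proof. by []. Qed.

Lemma d_fstX (R : pzRingType) (A : bimodRing R) (x : dorroh A) n :
  (x ^+ n).1 = x.1 ^+ n.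
Proof. elim: n => [|n IH]; first by []. by rewrite !exprS -IH. Qed.

Lemma d_emb (R : pzRingType) (A : bimodRing R) (x y : R) :
  ((x, 0) : dorroh A) * (y, 0) = (x * y, 0).
Proof.
by rewrite d_mulE /dorroh_mul /= bm_lact0 bm_ract0l bm_mul0r !addr0.
Qed.

Lemma d_embX (R : pzRingType) (A : bimodRing R) (x : R) n :
  ((x, 0) : dorroh A) ^+ n = (x ^+ n, 0).
Proof. elim: n => [|n IH]; first by []. by rewrite !exprS IH d_emb. Qed.

Lemma d_embB (R : pzRingType) (A : bimodRing R) (x y : R) :
  ((x, 0) : dorroh A) - (y, 0) = (x - y, 0).
Proof. apply: injective_projections => /=; [by [] | exact: subrr]. Qed.

Lemma li_add (T : pzRingType) (I : T -> Prop) x y :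
  left_ideal I -> I x -> I y -> I (x + y).
Proof.
case=> I0 IB _ Ix Iy. have := IB x (0 - y) Ix (IB _ _ I0 Iy).
by rewrite sub0r opprK.
Qed.

Lemma li_opp (T : pzRingType) (I : T -> Prop) y :
  left_ideal I -> I y -> I (- y).
Proof. case=> I0 IB _ Iy. by have := IB _ _ I0 Iy; rewrite sub0r. Qed.

Definition qm (R : pzRingType) (A : bimodRing R) (a b : A) : A :=
  a + b + bm_mul a b.

Lemma qmA (R : pzRingType) (A : bimodRing R) (a b c : A) :
  qm a (qm b c) = qm (qm a b) c.
Proof.
rewrite /qm !bm_mulDr !bm_mulDl bm_mulA.
by rewrite (AC ((1*3)*3) ((1*2*5*3)*(6*4*7))).
Qed.

Lemma left_qi (R : pzRingType) (A : bimodRing R) :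
  (forall a : A, exists w : A, a + w + bm_mul a w = 0) ->
  forall a : A, exists c : A, c + a + bm_mul c a = 0.
Proof.
move=> H a. have [w hw] := H a. have [v hv] := H w.
exists w.
have -> : a = v.
  have e1 : qm a (qm w v) = a by rewrite /qm hv bm_mulr0 !addr0.
  have e2 : qm (qm a w) v = v by rewrite /qm hw bm_mul0r add0r addr0.
  by rewrite -e1 qmA e2.
exact: hv.
Qed.

Lemma max_A (R : pzRingType) (A : bimodRing R) :
  (forall a : A, exists w : A, a + w + bm_mul a w = 0) ->
  forall M : dorroh A -> Prop, maximal_left_ideal M -> forall a : A, M (0, a).
Proof.
move=> Hq M [[M0 MB Mm] M1 Mmax] a.
apply: NNPP => Na.
pose p : dorroh A := (0, a).
pose I := fun x : dorroh A => exists m s, M m /\ x = m + s * p.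
have LI : left_ideal I.
  split.
  - by exists 0, 0; rewrite mul0r addr0.
  - move=> x y [m1 [s1 [h1 ->]]] [m2 [s2 [h2 ->]]].
    exists (m1 - m2), (s1 - s2); split; first exact: MB.
    by rewrite mulrBl opprD !addrA; congr (_ + _); rewrite addrAC.
  - move=> r x [m [s [h ->]]]; exists (r * m), (r * s); split; first exact: Mm.
    by rewrite mulrDr mulrA.
have sub : forall x, M x -> I x by move=> x hx; exists x, 0; rewrite mul0r addr0.
have : ~ ~ I 1.
  move=> nI; apply: Na; apply: (Mmax I LI sub nI).
  by exists 0, 1; rewrite mul1r add0r.
apply; case=> m [s [hm e]].
pose b := (s * p).2.
have sp : s * p = (0, b) by rewrite /b d_mulE /dorroh_mul /= mulr0.
have em : m = 1 - ((0, b) : dorroh A) by rewrite e sp addrK.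
have [c hc] := left_qi Hq (- b).
have := Mm ((1, c) : dorroh A) m hm.
rewrite em d_mulE /dorroh_mul /= subr0 sub0r mul1r bm_lact1 bm_ract1 (addrC (- b)) hc.
exact: M1.
Qed.

Lemma max_restrict (R : pzRingType) (A : bimodRing R) :
  (forall a : A, exists w : A, a + w + bm_mul a w = 0) ->
  forall M : dorroh A -> Prop, maximal_left_ideal M ->
  maximal_left_ideal (fun r : R => M ((r, 0) : dorroh A)).
Proof.
move=> Hq M MM; have MA := max_A Hq MM.
case: MM => [[M0 MB Mm] M1 Mmax].
have Mfst : forall x : dorroh A, M x -> M ((x.1, 0) : dorroh A).
  move=> [x1 x2] hx /=.
  have := MB _ _ hx (MA x2).
  by have -> : ((x1, x2) : dorroh A) - (0, x2) = (x1, 0)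
    by apply: injective_projections => /=; [exact: subr0 | exact: subrr].
split.
- split; first exact: M0.
  + by move=> x y hx hy; rewrite -d_embB; exact: MB.
  + by move=> r x hx; rewrite -d_emb; exact: Mm.
- exact: M1.
- move=> I [I0 IB Im] sub nI x Ix.
  pose I' := fun p : dorroh A => I p.1.
  have LI : left_ideal I' by split => //; move=> ? ? ; [exact: IB | exact: Im].
  have := Mmax I' LI _ nI ((x, 0) : dorroh A) Ix; apply.
  by move=> p hp; apply: sub; exact: Mfst.
Qed.

Lemma max_lift (R : pzRingType) (A : bimodRing R) :
  forall M : R -> Prop, maximal_left_ideal M ->
  maximal_left_ideal (fun p : dorroh A => M p.1).
Proof.
move=> M [[M0 MB Mm] M1 Mmax].
split.
- split => //; move=> ? ?; [exact: MB | exact: Mm].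
- exact: M1.
- move=> I LI sub nI x Ix.
  case: (LI) => I0 IB Im.
  pose J := fun r : R => I ((r, 0) : dorroh A).
  have LJ : left_ideal J.
    split; first exact: I0.
    + by move=> u v hu hv; rewrite /J -d_embB; exact: IB.
    + by move=> r u hu; rewrite /J -d_emb; exact: Im.
  apply: (Mmax J LJ _ nI).
    by move=> r hr; apply: sub.
  rewrite /J.
  have hx2 : I ((0, x.2) : dorroh A) by apply: sub; exact: M0.
  have := IB _ _ Ix hx2.
  by have -> : x - ((0, x.2) : dorroh A) = (x.1, 0)
    by apply: injective_projections => /=; [exact: subr0 | exact: subrr].
Qed.

Theorem proposition2p26 (R : pzRingType) (A : bimodRing R) :
  (forall a : A, exists w : A, a + w + bm_mul a w = 0) ->
  (NJ_symmetric R <-> NJ_symmetric (dorroh A)).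
Proof.
move=> Hq; split.
- move=> hR a b c [n hn] M MM.
  have hn1 : (a.1 * b.1 * c.1) ^+ n = 0 by rewrite -[LHS](d_fstX (a * b * c)) hn.
  have J1 := hR _ _ _ (ex_intro _ n hn1).
  have N1 := J1 _ (max_restrict Hq MM).
  have A2 := max_A Hq MM (b * a * c).2.
  case: MM => [LM _ _].
  have := li_add LM N1 A2.
  by have -> : ((b.1 * a.1 * c.1, 0) : dorroh A) + (0, (b * a * c).2) = b * a * c
    by apply: injective_projections => /=; [exact: addr0 | exact: add0r].
- move=> hS a b c [n hn] M MM.
  have hn' : Defs.nilp (((a, 0) : dorroh A) * (b, 0) * (c, 0)).
    by exists n; rewrite !d_emb d_embX hn.
  have := hS _ _ _ hn' _ (max_lift A MM).
  by rewrite !d_emb.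
Qed.
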